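(* Let $q$ be an odd prime power and $n\ge1$ an integer with $\gcd(n+1,q)=1$. If $q>2n$, then there exists $a\in\mathbb{F}_q$ such that $C_n(a)$ is LCD.
   Context: For $a\in\mathbb{F}_q$ and $n \ge 1$, $T_n(a)$ denotes the $n\times n$ symmetric tridiagonal Toeplitz matrix over $\mathbb{F}_q$ with all diagonal entries equal to $a$, all entries on the first super- and sub-diagonals equal to $1$, and all other entries $0$. $C_n(a)$ is the $[2n,n]$ linear code over $\mathbb{F}_q$ with generator matrix $[I_n \mid T_n(a)]$. A linear code $C$ is LCD if $C\cap C^\perp=\{0\}$ (Euclidean dual). *)

(* Defs.v *)
From HB Require Import structures.
From mathcomp Require Import all_boot all_order all_algebra all_field.
Set Implicit Arguments. Unset Strict Implicit. Unset Printing Implicit Defensive.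
Import GRing.Theory.
Local Open Scope ring_scope.

Definition tridiag (F : fieldType) (n : nat) (a : F) : 'M[F]_n :=
  \matrix_(i < n, j < n)
    if i == j :> nat then a
    else if (i.+1 == j :> nat) || (j.+1 == i :> nat) then 1 else 0.

(* generator matrix [I_n | T_n(a)] of C_n(a) *)
Definition genC (F : fieldType) (n : nat) (a : F) : 'M[F]_(n, n + n) :=
  row_mx 1%:M (tridiag n a).

Definition in_code (F : fieldType) (k N : nat) (G : 'M[F]_(k, N)) (x : 'rV[F]_N) : bool :=
  (x <= G)%MS.

Definition edot (F : fieldType) (N : nat) (x y : 'rV[F]_N) : F :=
  \sum_(i < N) x 0 i * y 0 i.

Definition in_dual (F : fieldType) (k N : nat) (G : 'M[F]_(k, N)) (x : 'rV[F]_N) : Prop :=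
  forall y, in_code G y -> edot x y = 0.

Definition LCD (F : fieldType) (k N : nat) (G : 'M[F]_(k, N)) : Prop :=
  forall x, in_code G x -> in_dual G x -> x = 0.

(* Main.v *)
Require Import Defs.
From HB Require Import structures.
From mathcomp Require Import all_boot all_order all_algebra all_field.
Local Open Scope ring_scope.
Import GRing.Theory.
From mathcomp Require Import ring.

Lemma tridiag_split (F : fieldType) (n : nat) (a : F) :
  tridiag n a = a%:M + tridiag n 0.
Proof.
apply/matrixP=> i j; rewrite !mxE; case: eqP => [/val_inj ->|ne].
  by rewrite eqxx addr0.
have -> : (i == j) = false by apply/eqP => e; apply: ne; rewrite e.
by rewrite mulr0n add0r.
Qed.

Lemma tridiag_tr (F : fieldType) (n : nat) (a : F) :
  (tridiag n a)^T = tridiag n a.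
Proof.
apply/matrixP=> i j; rewrite !mxE eq_sym; congr (if _ then _ else _).
by rewrite orbC.
Qed.

Lemma genC_mul (F : fieldType) (n : nat) (a : F) :
  genC n a *m (genC n a)^T = 1%:M + tridiag n a *m tridiag n a.
Proof.
by rewrite /genC tr_row_mx mul_row_col trmx1 mulmx1 tridiag_tr.
Qed.

Lemma LCD_of_det (F : fieldType) (n : nat) (a : F) :
  \det (1%:M + tridiag n a *m tridiag n a) != 0 -> LCD (genC n a).
Proof.
move=> hdet x /submxP [u ->] hdual.
have h0 : u *m genC n a *m (genC n a)^T = 0.
  apply/rowP=> i; rewrite [RHS]mxE.
  have := hdual (row i (genC n a)) (row_sub i _).
  rewrite /edot => <-; rewrite mxE; apply: eq_bigr => k _.
  by rewrite !mxE.
rewrite -mulmxA genC_mul in h0.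
case: (eqVneq u 0) => [->|unz]; first by rewrite mul0mx.
by move: hdet; have -> : \det (1%:M + tridiag n a *m tridiag n a) == 0
  by apply/det0P; exists u.
Qed.

Definition B0 (F : fieldType) (n : nat) : 'M[F]_(n + n) :=
  block_mx (- tridiag n 0) (-1) 1 (- tridiag n 0).

Lemma det_of_nonroot (F : fieldType) (n : nat) (a : F) :
  ~~ root (char_poly (B0 F n)) a ->
  \det (1%:M + tridiag n a *m tridiag n a) != 0.
Proof.
rewrite -eigenvalue_root_char => hne; apply/negP => /det0P [v vnz hv].
apply: (negP hne); apply/eigenvalueP.
set T := tridiag n a.
have hS : - tridiag n 0 = a%:M - T.
  by rewrite /T (tridiag_split F n a) opprD addrA subrr add0r.

exists (row_mx v (v *m T)).
  rewrite /B0 hS mul_row_block scale_row_mx; congr row_mx.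
    by rewrite mulmxBr mul_mx_scalar mulmx1 -addrA addNr addr0.
  have hv' : v *m (T *m T) = - v.
    by apply/eqP; rewrite -addr_eq0 addrC -[v in v + _]mulmx1 -mulmxDr hv.
  rewrite mulmxN mulmx1 mulmxBr mul_mx_scalar -mulmxA hv' opprK.
  by rewrite (addrC (a *: _)) addKr.
by rewrite row_mx_eq0 negb_and vnz.
Qed.

Theorem corollary2p2 (F : finFieldType) (n : nat) :
  odd #|F| -> (0 < n)%N -> coprime n.+1 #|F| -> (2 * n < #|F|)%N ->
  exists a : F, LCD (genC n a).
Proof.
move=> _ _ _ hq.
have [a ha] : exists a : F, ~~ root (char_poly (B0 F n)) a.
  apply/existsP; rewrite -negb_forall; apply/negP => /forallP hall.
  have p0 : char_poly (B0 F n) != 0.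
    by rewrite -size_poly_eq0 size_char_poly.
  have := max_poly_roots p0 (rs := enum F).
  rewrite enum_uniq size_char_poly -cardE.
  have -> : all (root (char_poly (B0 F n))) (enum F).
    by apply/allP => x _; apply: hall.
  move=> /(_ isT isT); rewrite ltnS => hle.
  by move: hq; rewrite mul2n -addnn ltnNge hle.
by exists a; apply: LCD_of_det; apply: det_of_nonroot.
Qed.
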